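(* Let $G$ be a group, $g,h,c\in G$, and $k=|G:C_G(h)|$, assumed finite. If the set $\{x\in G:[x,g,h]=c\}$ is $2k$-large in $G$, then $[a,g,h]=1$ for all $a\in G$. Similarly, if $c\in Z(G)$ and the set $\{x\in G:[g,x,h]=c\}$ is $2k$-large in $G$, then $[g,a,h]=1$ for all $a\in G$.
   Context: $[a,b]=a^{-1}b^{-1}ab$ and $[a,b,d]=[[a,b],d]$. A subset $X\subseteq G$ is $k$-large in $G$ if the intersection of any $k$ left translates $a_1X\cap\dots\cap a_kX$ ($a_i\in G$) is non-empty. *)

(* Defs.v *)
From mathcomp Require Import all_boot.
Set Implicit Arguments. Unset Strict Implicit. Unset Printing Implicit Defensive.

Record group := Group {
  carrier :> Type;
  gmul : carrier -> carrier -> carrier;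
  ginv : carrier -> carrier;
  gone : carrier;
  gmulA : forall x y z, gmul x (gmul y z) = gmul (gmul x y) z;
  gmul1 : forall x, gmul gone x = x;
  gmulV : forall x, gmul (ginv x) x = gone
}.

Section Defs.
Variable G : group.
Local Notation "x * y" := (gmul x y).
Local Notation "x ^-1" := (ginv x).

Definition comm (a b : G) : G := a^-1 * b^-1 * a * b.
Definition comm3 (a b d : G) : G := comm (comm a b) d.

Definition centralizer (h : G) : G -> Prop := fun x => x * h = h * x.
Definition center : G -> Prop := fun z => forall y : G, z * y = y * z.

Definition has_index (H : G -> Prop) (k : nat) : Prop :=
  exists t : 'I_k -> G,
    (forall x : G, exists i : 'I_k, H ((t i)^-1 * x)) /\
    (forall i j : 'I_k, H ((t i)^-1 * t j) -> i = j).

(* X is n-large: any n left translates a_1 X, ..., a_n X intersect;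
   x \in a X  iff  a^-1 x \in X *)
Definition large (n : nat) (X : G -> Prop) : Prop :=
  forall a : 'I_n -> G, exists x : G, forall i : 'I_n, X ((a i)^-1 * x).
End Defs.

(* Main.v *)
Require Import Defs.
From mathcomp Require Import all_boot.

Section GL.
Variable G : group.
Local Notation "x * y" := (gmul x y).
Local Notation "x ^-1" := (ginv x).
Local Notation "1" := (gone G).

Lemma mulgV (x : G) : x * x^-1 = 1.
Proof.
rewrite -{1}(gmul1 (x * x^-1)) -{1}(gmulV (x^-1)).
rewrite -gmulA (gmulA x^-1 x) gmulV gmul1 gmulV //.
Qed.

Lemma mulg1 (x : G) : x * 1 = x.
Proof. by rewrite -(gmulV x) gmulA mulgV gmul1. Qed.

Lemma mulKg (x y : G) : x^-1 * (x * y) = y.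
Proof. by rewrite gmulA gmulV gmul1. Qed.

Lemma mulKVg (x y : G) : x * (x^-1 * y) = y.
Proof. by rewrite gmulA mulgV gmul1. Qed.

Lemma mulgI (x y z : G) : x * y = x * z -> y = z.
Proof. by move=> e; rewrite -(mulKg x y) e mulKg. Qed.

Lemma mulIg (x y z : G) : y * x = z * x -> y = z.
Proof. by move=> e; rewrite -(mulg1 y) -(mulgV x) gmulA e -gmulA mulgV mulg1. Qed.

Lemma invMg (x y : G) : (x * y)^-1 = y^-1 * x^-1.
Proof.
apply: (@mulIg (x * y)); rewrite gmulV -gmulA (gmulA x^-1) gmulV gmul1 gmulV //.
Qed.

Lemma invgK (x : G) : (x^-1)^-1 = x.
Proof. by apply: (@mulIg x^-1); rewrite gmulV mulgV. Qed.

Lemma comm1 (w h : G) : comm w h = 1 <-> w * h = h * w.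
Proof.
rewrite /comm; split => e.
  apply: (@mulgI (w^-1 * h^-1)). rewrite -!gmulA in e. rewrite -(gmulA w^-1 h^-1 (w*h)) e.
  by rewrite -gmulA mulKg gmulV.
by rewrite -!gmulA e mulKg gmulV.
Qed.

Lemma key1 (p q h : G) : comm (q * p) h = comm p h -> comm q h = 1.
Proof.
rewrite /comm invMg => e.
have e2 : q^-1 * (h^-1 * (q * (p * h))) = h^-1 * (p * h).
  apply: (@mulgI p^-1). by rewrite -!gmulA in e.
apply: (@mulIg (h^-1 * (p * h))). by rewrite gmul1 -!gmulA mulKVg.
Qed.

Lemma key2 (p q h : G) : center (comm p h) -> comm (p * q) h = comm p h -> comm q h = 1.
Proof.
move=> cen e.
have E1 : comm (p * q) h = q^-1 * (comm p h * (h^-1 * (q * h))).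
  by rewrite /comm invMg -!gmulA mulKVg.
have E2 : q^-1 * (comm p h * (h^-1 * (q * h))) = comm p h * comm q h.
  rewrite gmulA -cen -gmulA; congr gmul. by rewrite /comm -!gmulA.
rewrite E1 E2 in e. apply: (@mulgI (comm p h)). by rewrite e mulg1.
Qed.

Lemma commMl (b u g : G) : comm (b * u) g = (u^-1 * comm b g * u) * comm u g.
Proof. by rewrite /comm invMg -!gmulA !mulKVg. Qed.

Lemma commMr (g b u : G) : comm g (b * u) = comm g u * (u^-1 * comm g b * u).
Proof. by rewrite /comm invMg -!gmulA !mulKVg. Qed.

Lemma conjC (u w h : G) : u * h = h * u -> (u^-1 * w * u) * h = h * (u^-1 * w * u) ->
  w * h = h * w.
Proof.
move=> cu e.
have cu' : u^-1 * h = h * u^-1.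
  apply: (@mulgI u); apply: (@mulIg u).
  by rewrite mulKVg -!gmulA gmulV mulg1 cu.
apply: (@mulgI u^-1); apply: (@mulIg u).
rewrite -!gmulA -cu !gmulA e cu' -!gmulA //.
Qed.
End GL.

Lemma aux (G : group) (h : G) (k : nat) (t : 'I_k.+1 -> G) (P : G -> Prop) :
  (forall x : G, exists i : 'I_k.+1, centralizer h (gmul (ginv (t i)) x)) ->
  large (2 * k.+1) P -> forall b, exists u, centralizer h u /\ P u /\ P (gmul b u).
Proof.
move=> cov L b.
pose a := fun i : 'I_(2 * k.+1) => if i < k.+1 then t (inord i)
  else gmul (t (inord (i - k.+1))) (ginv b).
have [x Hx] := L a. have [j Hj] := cov x.
exists (gmul (ginv (t j)) x); split; first done.
have i1 : j < 2 * k.+1 by rewrite mul2n -addnn ltn_addr.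
have i2 : j + k.+1 < 2 * k.+1 by rewrite mul2n -addnn ltn_add2r.
split.
  by move: (Hx (Ordinal i1)); rewrite /a /= ltn_ord inord_val.
move: (Hx (Ordinal i2)); rewrite /a /= ltnNge leq_addl /= addnK inord_val.
by rewrite invMg invgK -gmulA.
Qed.

Theorem theorem5p11 (G : group) (g h c : G) (k : nat) :
  has_index (centralizer h) k ->
  (large (2 * k) (fun x => comm3 x g h = c) ->
     forall a : G, comm3 a g h = gone G) /\
  (center c -> large (2 * k) (fun x => comm3 g x h = c) ->
     forall a : G, comm3 g a h = gone G).
Proof.
move=> [t [cov _]].
case: k t cov => [|k] t cov.
  by have [[i Hi] _] := cov (gone G).
split.
  move=> L a. have [u [cu [Pu Pbu]]] := @aux _ _ _ _ _ cov L a.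
  rewrite /comm3 in Pu Pbu *. rewrite commMl -Pu in Pbu.
  have /(comm1 _ _ _) e := @key1 _ _ _ _ Pbu. apply/(comm1 _ _ _). exact: (@conjC _ _ _ _ cu e).
move=> cen L a. have [u [cu [Pu Pbu]]] := @aux _ _ _ _ _ cov L a.
rewrite /comm3 in Pu Pbu *. rewrite commMr -Pu in Pbu.
have cen' : center (comm (comm g u) h) by rewrite Pu.
have /(comm1 _ _ _) e := @key2 _ _ _ _ cen' Pbu. apply/(comm1 _ _ _). exact: (@conjC _ _ _ _ cu e).
Qed.
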